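(* Let $G_N=(V,E)$ be a connected, undirected, edge-weighted graph on $N$ nodes and let $v\in V$ be the initial mutant node. Then one of the following holds: (1) $\rho^{\mathrm{Bd}}_{r=1}(G_N,v)<\rho^{\mathrm{Bd}}_{r=1}(K_N)$; (2) $\rho^{\mathrm{dB}}_{r=1}(G_N,v)<\rho^{\mathrm{dB}}_{r=1}(K_N)$; (3) $\rho^{\mathrm{Bd}}_{r=1}(G_N,v)=\rho^{\mathrm{Bd}}_{r=1}(K_N)$ and $\rho^{\mathrm{dB}}_{r=1}(G_N,v)=\rho^{\mathrm{dB}}_{r=1}(K_N)$.
   Context: Each edge $\{u,v\}$ has a positive weight $w(u,v)$ and $\deg(u)=\sum_{v} w(u,v)$. Each node is occupied by a resident (fitness 1) or a mutant (fitness $r\ge 1$); $f(u)$ is the fitness at $u$ and $F=\sum_u f(u)$. Moran Birth-death (Bd) process: each step a node $u$ is chosen with probability $f(u)/F$ and its offspring replaces a neighbor $v$ chosen with probability $w(u,v)/\deg(u)$. Moran death-Birth (dB) process: each step a uniformly random node $v$ dies and is replaced by the offspring of a neighbor $u$ chosen with probability $f(u)w(u,v)/\sum_{u'}f(u')w(u',v)$. $\rho^{\mathrm{Bd}}_r(G_N,v)$ (resp. $\rho^{\mathrm{dB}}_r(G_N,v)$) is the probability that mutants eventually occupy all nodes when initially only $v$ is a mutant. $K_N$ is the unweighted complete graph on $N$ nodes, and $\rho_r(K_N)$ denotes the fixation probability of a single mutant on $K_N$ (independent of the starting node). *)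

(* Defs.v *)
From HB Require Import structures.
From mathcomp Require Import all_boot all_order all_algebra.
From mathcomp Require Import all_classical all_reals all_analysis.
Set Implicit Arguments. Unset Strict Implicit. Unset Printing Implicit Defensive.
Import Order.TTheory GRing.Theory Num.Theory numFieldNormedType.Exports.
Local Open Scope ring_scope.

Section Moran.
Variables (R : realType) (T : finType).

(* A (connected, undirected, edge-weighted) graph is given by a weight
   function w : T -> T -> R; w u v > 0 iff {u,v} is an edge. *)
Definition weighted_graph (w : T -> T -> R) : Prop :=
  [/\ (forall u v, w u v = w v u), (forall u v, 0 <= w u v) & (forall u, w u u = 0)].

Definition adj (w : T -> T -> R) : rel T := fun u v => 0 < w u v.

Definition graph_connected (w : T -> T -> R) : Prop :=
  forall u v, connect (adj w) u v.

Definition complete_w : T -> T -> R := fun u v => if u == v then 0 else 1.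

Definition deg (w : T -> T -> R) (u : T) : R := \sum_(x : T) w u x.

(* States: the set S of mutant nodes. *)
Definition fitness (r : R) (S : {set T}) (u : T) : R := if u \in S then r else 1.
Definition total_fitness (r : R) (S : {set T}) : R := \sum_(u : T) fitness r S u.

(* After node u reproduces onto node x. *)
Definition update (S : {set T}) (u x : T) : {set T} :=
  if u \in S then x |: S else S :\ x.

Definition trans_Bd (w : T -> T -> R) (r : R) (S S' : {set T}) : R :=
  \sum_(u : T) \sum_(x : T)
    (fitness r S u / total_fitness r S) * (w u x / deg w u)
    * (update S u x == S')%:R.

Definition trans_dB (w : T -> T -> R) (r : R) (S S' : {set T}) : R :=
  \sum_(x : T) (#|T|%:R)^-1 * \sum_(u : T)
    (fitness r S u * w u x / \sum_(u' : T) fitness r S u' * w u' x)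
    * (update S u x == S')%:R.

(* Since [set: T]
   is absorbing, this is the probability of fixation within n steps. *)
Fixpoint prob_full (P : {set T} -> {set T} -> R) (n : nat) (S : {set T}) : R :=
  match n with
  | O => (S == [set: T])%:R
  | m.+1 => \sum_(S' : {set T}) P S S' * prob_full P m S'
  end.

Definition rho_Bd (w : T -> T -> R) (r : R) (v : T) : R :=
  limn (fun n => prob_full (trans_Bd w r) n [set v]).

Definition rho_dB (w : T -> T -> R) (r : R) (v : T) : R :=
  limn (fun n => prob_full (trans_dB w r) n [set v]).

End Moran.

(* Main.v *)
Require Import Defs.
From HB Require Import structures.
From mathcomp Require Import all_boot all_order all_algebra.
From mathcomp Require Import all_classical all_reals all_analysis.
From mathcomp Require Import zify ring lra.
Import Order.TTheory GRing.Theory Num.Theory numFieldNormedType.Exports.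
Local Open Scope ring_scope.
Set Implicit Arguments. Unset Strict Implicit.

Section Gen.
Variables (R : realType) (T : finType).

Lemma cvg_bigsum (I : finType) (f : I -> nat -> R) (l : I -> R) :
  (forall i, f i n @[n --> \oo] --> l i)%classic ->
  ((\sum_(i : I) f i n) @[n --> \oo] --> \sum_(i : I) l i)%classic.
Proof.
move=> H.
suff: forall s : seq I, ((\sum_(i <- s) f i n) @[n --> \oo] --> \sum_(i <- s) l i)%classic by apply.
elim=> [|a s IH].
  have -> : (fun n => \sum_(i <- [::]) f i n) = cst 0 by apply: funext=> n; rewrite big_nil.
  rewrite big_nil; exact: cvg_cst.
have -> : (fun n => \sum_(i <- a :: s) f i n) = (fun n => f a n) \+ (fun n => \sum_(i <- s) f i n).
  by apply: funext=> n; rewrite big_cons.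
rewrite big_cons; exact: cvgD.
Qed.

Definition Pq (q : T -> T -> R) (S S' : {set T}) : R :=
  \sum_(u : T) \sum_(x : T) q u x * (update S u x == S')%:R.

Lemma sum_ind (e : {set T}) (f : {set T} -> R) :
  \sum_(S' : {set T}) (e == S')%:R * f S' = f e.
Proof.
rewrite (bigD1 e) //= eqxx mul1r big1 ?addr0 // => S' /negbTE.
by rewrite eq_sym => ->; rewrite mul0r.
Qed.

Lemma Pq_sum q S (g : {set T} -> R) :
  \sum_(S' : {set T}) Pq q S S' * g S' = \sum_u \sum_x q u x * g (update S u x).
Proof.
rewrite /Pq.
under eq_bigr do rewrite big_distrl /=.
rewrite exchange_big /=; apply: eq_bigr=> u _.
under eq_bigr do rewrite big_distrl /=.
rewrite exchange_big /=; apply: eq_bigr=> x _.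
rewrite -(sum_ind (update S u x) g) big_distrr /=.
by apply: eq_bigr=> S' _; rewrite mulrA.
Qed.


Section Chain.
Variable q : T -> T -> R.
Hypothesis hq0 : forall u x, 0 <= q u x.
Hypothesis hq1 : \sum_u \sum_x q u x = 1.

Lemma Pq_ge0 S S' : 0 <= Pq q S S'.
Proof. by apply: sumr_ge0=> u _; apply: sumr_ge0=> x _; rewrite mulr_ge0. Qed.

Lemma harm_const (a : R) : \sum_u \sum_x q u x * a = a.
Proof.
rewrite -[RHS]mul1r -hq1 big_distrl /=; apply: eq_bigr=> u _.
by rewrite big_distrl.
Qed.

Lemma update_setT u x : update [set: T] u x = [set: T].
Proof. by rewrite /update finset.in_setT finset.setUT. Qed.

Lemma update_set0 u x : update (@finset.set0 T) u x = (@finset.set0 T).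
Proof. by rewrite /update finset.in_set0 finset.set0D. Qed.

Lemma pf_step n S : prob_full (Pq q) n.+1 S
   = \sum_u \sum_x q u x * prob_full (Pq q) n (update S u x).
Proof. by rewrite /= Pq_sum. Qed.

Lemma pf_setT n : prob_full (Pq q) n [set: T] = 1.
Proof.
elim: n=> [|n IH]; first by rewrite /= eqxx.
rewrite pf_step.
under eq_bigr do under eq_bigr do rewrite update_setT IH.
exact: harm_const.
Qed.

Lemma pf_set0 n : prob_full (Pq q) n (@finset.set0 T) = prob_full (Pq q) 0 (@finset.set0 T).
Proof.
elim: n=> [//|n IH]; rewrite pf_step.
under eq_bigr do under eq_bigr do rewrite update_set0 IH.
exact: harm_const.
Qed.

Lemma pf_bound n S : 0 <= prob_full (Pq q) n S <= 1.
Proof.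
elim: n S=> [|n IH] S; first by rewrite /=; case: (S == [set: T]); rewrite ?ler01 ?lexx.
rewrite pf_step; apply/andP; split.
  apply: sumr_ge0=> u _; apply: sumr_ge0=> x _.
  by rewrite mulr_ge0 //; case/andP: (IH (update S u x)).
rewrite -[X in _ <= X](harm_const 1); apply: ler_sum=> u _; apply: ler_sum=> x _.
by rewrite ler_wpM2l //; case/andP: (IH (update S u x)).
Qed.

Lemma pf_mono n S : prob_full (Pq q) n S <= prob_full (Pq q) n.+1 S.
Proof.
elim: n S=> [|n IH] S.
  rewrite pf_step /=; case: (boolP (S == [set: T])) => [/eqP->|_].
    rewrite -[X in X <= _](harm_const 1); apply: ler_sum=> u _; apply: ler_sum=> x _.
    by rewrite update_setT eqxx.
  apply: sumr_ge0=> u _; apply: sumr_ge0=> x _; by rewrite mulr_ge0.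
rewrite (pf_step n.+1) pf_step; apply: ler_sum=> u _; apply: ler_sum=> x _.
by rewrite ler_wpM2l.
Qed.

Definition h S := limn (fun n => prob_full (Pq q) n S).

Lemma pf_cvg S : ((fun n => prob_full (Pq q) n S) @ \oo --> h S)%classic.
Proof.
apply: nondecreasing_is_cvgn.
  apply/nondecreasing_seqP=> n; exact: pf_mono.
exists 1=> _ [n _ <-]; by case/andP: (pf_bound n S).
Qed.

Lemma h_harm S : h S = \sum_u \sum_x q u x * h (update S u x).
Proof.
rewrite {1}/h; apply: cvg_lim; first exact: Rhausdorff.
rewrite -(cvg_shiftS (fun n => prob_full (Pq q) n S)) /=.
have -> : (fun n => prob_full (Pq q) n.+1 S) = (fun n => \sum_u \sum_x q u x * prob_full (Pq q) n (update S u x)).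
  by apply: funext=> n; rewrite pf_step.
apply: cvg_bigsum=> u; apply: cvg_bigsum=> x.
apply: cvgMr; exact: pf_cvg.
Qed.


Lemma maxprinc (D : {set T} -> R) :
  D [set: T] = 0 -> D (@finset.set0 T) = 0 ->
  (forall S, D S = \sum_u \sum_x q u x * D (update S u x)) ->
  (forall S, S != finset.set0 -> S != [set: T] ->
     exists u, exists x, [/\ u \in S, x \notin S & 0 < q u x]) ->
  forall S, D S <= 0.
Proof.
move=> DT D0 Dh cross.
case: (@arg_maxP _ _ _ (@finset.set0 T) predT D isT) => S0 _ HS0.
set m := D S0.
suff key : forall k S, (#|~: S| <= k)%N -> D S = m -> m = 0.
  move=> S; rewrite -(key _ S0 (leqnn _) erefl); exact: HS0.
have HT : forall S : {set T}, S != [set: T] -> exists x, x \notin S.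
  move=> S hS; apply/existsP; apply: contraR hS=> /existsPn H.
  by apply/eqP/setP=> y; rewrite finset.in_setT; move: (H y); rewrite negbK.
have Hc : forall (S : {set T}) x, x \notin S -> (#|~: (x |: S)| < #|~: S|)%N.
  move=> S x hx; move: (cardsC S) (cardsC (x |: S)); rewrite cardsU1 hx /=.
  lia.
elim=> [|k IH] S hk hS.
  case: (boolP (S == [set: T])) => [/eqP ST|/HT [x hx]].
    by rewrite -hS ST.
  by move: (Hc S x hx); lia.
case: (boolP (S == [set: T])) => [/eqP ST|nT]; first by rewrite -hS ST.
case: (boolP (S == finset.set0)) => [/eqP Se0|n0]; first by rewrite -hS Se0.
have [u [x [uS xS qpos]]] := cross S n0 nT.
apply: (IH (x |: S)); first by move: (Hc S x xS); lia.
have Hsum : \sum_u \sum_x q u x * (m - D (update S u x)) = 0.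
  have -> : \sum_u \sum_x q u x * (m - D (update S u x))
     = \sum_u \sum_x q u x * m - \sum_u \sum_x q u x * D (update S u x).
    rewrite -sumrB; apply: eq_bigr=> u' _; rewrite -sumrB; apply: eq_bigr=> x' _.
    by rewrite mulrBr.
  by rewrite harm_const -Dh hS subrr.
have Hnn : forall u' x', 0 <= q u' x' * (m - D (update S u' x')).
  by move=> u' x'; rewrite mulr_ge0 // subr_ge0; exact: HS0.
have H1 : \sum_x q u x * (m - D (update S u x)) = 0.
  by apply: (psumr_eq0P _ Hsum) => // u' _; apply: sumr_ge0=> x' _.
have H2 : q u x * (m - D (update S u x)) = 0.
  by apply: (psumr_eq0P _ H1).
move: H2 => /eqP; rewrite mulf_eq0 (gt_eqF qpos) /= subr_eq0 /update uS => /eqP.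
by move=> ->.
Qed.


Lemma antisym_sum (K : T -> T -> R) (g : T -> R) :
  (forall u x, K u x = K x u) ->
  \sum_u \sum_x K u x * (g u - g x) = 0.
Proof.
move=> Ks.
have E : \sum_u \sum_x K u x * g x = \sum_u \sum_x K u x * g u.
  rewrite exchange_big /=; apply: eq_bigr=> u _; apply: eq_bigr=> x _.
  by rewrite Ks.
under eq_bigr do under eq_bigr do rewrite mulrBr.
under eq_bigr do rewrite sumrB.
by rewrite sumrB E subrr.
Qed.

Variable c : T -> R.
Hypothesis hc : forall x, 0 < c x.
Hypothesis hsym : forall u x, q u x * c x = q x u * c u.

Definition Z := \sum_y c y.
Definition M (S : {set T}) := (\sum_(y in S) c y) / Z.

Lemma Z_gt0 (v : T) : 0 < Z.
Proof.
rewrite /Z (bigD1 v) //= ltr_wpDr //; first by apply: sumr_ge0=> y _; exact: ltW.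
Qed.

Lemma M_update S u x :
  M (update S u x) = M S + ((u \in S)%:R - (x \in S)%:R) * c x / Z.
Proof.
rewrite /M /update; case: (boolP (u \in S)) => uS; case: (boolP (x \in S)) => xS.
- have -> : x |: S = S.
    by apply/setP=> y; rewrite in_setU1; case: eqP=> // ->; rewrite xS.
  by rewrite subrr mul0r mul0r addr0.
- by rewrite big_setU1 //= mulrDl addrC subr0 mul1r.
- rewrite [in RHS](big_setD1 x) //=. rewrite sub0r mulN1r mulrDl. lra.
- have -> : S :\ x = S.
    by apply/setP=> y; rewrite in_setD1; case: eqP=> // ->; rewrite (negbTE xS).
  by rewrite subrr mul0r mul0r addr0.
Qed.

Lemma M_harm S : M S = \sum_u \sum_x q u x * M (update S u x).
Proof.
under eq_bigr do under eq_bigr do rewrite M_update mulrDr.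
under eq_bigr do rewrite big_split /=.
rewrite big_split /= harm_const.
suff -> : \sum_u \sum_x q u x * (((u \in S)%:R - (x \in S)%:R) * c x / Z) = 0 by rewrite addr0.
have -> : \sum_u \sum_x q u x * (((u \in S)%:R - (x \in S)%:R) * c x / Z)
  = (\sum_u \sum_x (q u x * c x) * ((u \in S)%:R - (x \in S)%:R)) / Z.
  rewrite big_distrl; apply: eq_bigr=> u _; rewrite big_distrl; apply: eq_bigr=> x _ /=.
  by rewrite mulrA [X in X / Z = _]mulrA -[(q u x * _) * c x]mulrA [(_ - _) * c x]mulrC mulrA.
rewrite antisym_sum ?mul0r //.
Qed.


Hypothesis cross : forall S : {set T}, S != finset.set0 -> S != [set: T] ->
     exists u, exists x, [/\ u \in S, x \notin S & 0 < q u x].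

Lemma h_formula (v : T) : h [set v] = c v / Z.
Proof.
have Zp := Z_gt0 v.
have T0 : (@finset.set0 T) != [set: T].
  apply/negP=> /eqP/setP/(_ v); by rewrite finset.in_set0 finset.in_setT.
pose D S := h S - M S.
have DT : D [set: T] = 0.
  rewrite /D /M /h.
  have -> : (fun n => prob_full (Pq q) n [set: T]) = cst 1 by apply: funext=> n; rewrite pf_setT.
  rewrite lim_cst // (_ : \sum_(y in [set: T]) c y = Z); last by apply: eq_bigl=> y; rewrite finset.in_setT.
  by rewrite divff ?subrr //; exact: lt0r_neq0.
have D0 : D finset.set0 = 0.
  rewrite /D /M /h.
  have -> : (fun n => prob_full (Pq q) n finset.set0) = cst 0.
    by apply: funext=> n; rewrite pf_set0 /= (negbTE T0).
  by rewrite lim_cst // big_set0 mul0r subrr.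
have Dh : forall S, D S = \sum_u \sum_x q u x * D (update S u x).
  move=> S; rewrite /D {1}h_harm {1}M_harm -sumrB; apply: eq_bigr=> u _.
  by rewrite -sumrB; apply: eq_bigr=> x _; rewrite mulrBr.
have Dle := maxprinc DT D0 Dh cross.
have Dge : forall S, - D S <= 0.
  apply: maxprinc; rewrite ?DT ?D0 ?oppr0 // => S.
  by rewrite Dh -sumrN; apply: eq_bigr=> u _; rewrite -sumrN; apply: eq_bigr=> x _; rewrite mulrN.
have : D [set v] = 0 by apply/eqP; rewrite eq_le Dle /= -oppr_le0 Dge.
by rewrite /D /M big_set1 => /eqP; rewrite subr_eq0 => /eqP.
Qed.

End Chain.
End Gen.

Section Graph.
Variables (R : realType) (T : finType) (w : T -> T -> R).
Hypothesis hw : weighted_graph w.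
Hypothesis hconn : graph_connected w.
Variables (u0 x0 : T).
Hypothesis hux : u0 != x0.

Lemma wsym u x : w u x = w x u. Proof. by case: hw. Qed.
Lemma wge0 u x : 0 <= w u x. Proof. by case: hw. Qed.

Lemma nbr u : exists y, 0 < w u y.
Proof.
have [x hx] : exists x, x != u.
  case: (eqVneq u0 u) => [<-|h]; first by exists x0; rewrite eq_sym.
  by exists u0.
case/connectP: (hconn u x) => [[|y p] Hp Hl]; first by rewrite Hl eqxx in hx.
by case/andP: Hp => hy _; exists y.
Qed.

Lemma deg_gt0 u : 0 < deg w u.
Proof.
have [y hy] := nbr u.
rewrite /deg (bigD1 y) //= ltr_wpDr //; apply: sumr_ge0=> x _; exact: wge0.
Qed.

Lemma crossing (S : {set T}) : S != finset.set0 -> S != [set: T] ->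
  exists u, exists x, [/\ u \in S, x \notin S & 0 < w u x].
Proof.
move=> n0 nT.
have [a aS] : exists a, a \in S.
  case/finset.set0Pn: n0 => a ha; by exists a.
have [b bS] : exists b, b \notin S.
  apply/existsP; apply: contraR nT=> /existsPn H.
  by apply/eqP/setP=> y; rewrite finset.in_setT; move: (H y); rewrite negbK.
apply/not_existsP=> H.
have cl : closed_mem (adj w) (mem S).
  move=> y z; rewrite /adj => hyz.
  case: (boolP (y \in S)) => yS; case: (boolP (z \in S)) => zS //.
  - by exfalso; apply: (H y); exists z; split.
  - by exfalso; apply: (H z); exists y; split => //; rewrite wsym.
by move: (closed_connect cl (hconn a b)); rewrite aS (negbTE bS).
Qed.


Definition NN : R := #|T|%:R.

Lemma NN_gt0 : 0 < NN.
Proof. by rewrite /NN ltr0n; apply/card_gt0P; exists u0. Qed.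

Lemma total1 (S : {set T}) : total_fitness 1 S = NN.
Proof.
rewrite /total_fitness /fitness.
under eq_bigr do rewrite if_same.
by rewrite sumr_const.
Qed.

Definition qBd u x := NN^-1 * (w u x / deg w u).
Definition qdB u x := NN^-1 * (w u x / deg w x).

Lemma trans_Bd1 : trans_Bd w 1 = Pq qBd.
Proof.
apply: funext=> S; apply: funext=> S'.
rewrite /trans_Bd /Pq; apply: eq_bigr=> u _; apply: eq_bigr=> x _.
by rewrite total1 /fitness if_same /qBd mul1r.
Qed.

Lemma degT x : \sum_(u' : T) w u' x = deg w x.
Proof. by apply: eq_bigr=> u' _; rewrite wsym. Qed.

Lemma trans_dB1 : trans_dB w 1 = Pq qdB.
Proof.
apply: funext=> S; apply: funext=> S'.
rewrite /trans_dB /Pq exchange_big /=; apply: eq_bigr=> u _.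
rewrite big_distrr /=; apply: eq_bigr=> x _.
under eq_bigr do rewrite /fitness if_same mul1r.
by rewrite degT /fitness if_same mul1r /qdB mulrA.
Qed.

Lemma qBd_ge0 u x : 0 <= qBd u x.
Proof. by rewrite /qBd mulr_ge0 // ?invr_ge0 ?(ltW NN_gt0) // divr_ge0 ?wge0 // ltW ?deg_gt0. Qed.

Lemma qdB_ge0 u x : 0 <= qdB u x.
Proof. by rewrite /qdB mulr_ge0 // ?invr_ge0 ?(ltW NN_gt0) // divr_ge0 ?wge0 // ltW ?deg_gt0. Qed.

Lemma sumN1 : \sum_(u : T) NN^-1 = 1.
Proof. by rewrite sumr_const -mulr_natr -/NN mulVf // lt0r_neq0 // NN_gt0. Qed.

Lemma qBd_sum : \sum_u \sum_x qBd u x = 1.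
Proof.
rewrite -sumN1; apply: eq_bigr=> u _.
rewrite /qBd -big_distrr /= -mulr_suml -/(deg w u) divff ?mulr1 //.
exact: lt0r_neq0 (deg_gt0 u).
Qed.

Lemma qdB_sum : \sum_u \sum_x qdB u x = 1.
Proof.
rewrite exchange_big /= -sumN1; apply: eq_bigr=> x _.
rewrite /qdB -big_distrr /= -mulr_suml degT divff ?mulr1 //.
exact: lt0r_neq0 (deg_gt0 x).
Qed.

Lemma qBd_pos u x : 0 < w u x -> 0 < qBd u x.
Proof. by move=> h; rewrite /qBd mulr_gt0 ?invr_gt0 ?NN_gt0 // divr_gt0 // deg_gt0. Qed.

Lemma qdB_pos u x : 0 < w u x -> 0 < qdB u x.
Proof. by move=> h; rewrite /qdB mulr_gt0 ?invr_gt0 ?NN_gt0 // divr_gt0 // deg_gt0. Qed.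

Lemma crossBd (S : {set T}) : S != finset.set0 -> S != [set: T] ->
  exists u, exists x, [/\ u \in S, x \notin S & 0 < qBd u x].
Proof.
move=> a b; have [u [x [h1 h2 h3]]] := crossing a b.
by exists u, x; split => //; exact: qBd_pos.
Qed.

Lemma crossdB (S : {set T}) : S != finset.set0 -> S != [set: T] ->
  exists u, exists x, [/\ u \in S, x \notin S & 0 < qdB u x].
Proof.
move=> a b; have [u [x [h1 h2 h3]]] := crossing a b.
by exists u, x; split => //; exact: qdB_pos.
Qed.

Lemma rhoBd_formula v : rho_Bd w 1 v = (deg w v)^-1 / \sum_y (deg w y)^-1.
Proof.
rewrite /rho_Bd trans_Bd1.
apply: (h_formula qBd_ge0 qBd_sum (c := fun x => (deg w x)^-1)).
- by move=> x; rewrite invr_gt0 deg_gt0.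
- by move=> u x; rewrite /qBd (wsym u x); field; rewrite !lt0r_neq0 ?deg_gt0 ?NN_gt0.
- exact: crossBd.
Qed.

Lemma rhodB_formula v : rho_dB w 1 v = deg w v / \sum_y deg w y.
Proof.
rewrite /rho_dB trans_dB1.
apply: (h_formula qdB_ge0 qdB_sum (c := fun x => deg w x)).
- by move=> x; rewrite deg_gt0.
- by move=> u x; rewrite /qdB (wsym u x); field; rewrite !lt0r_neq0 ?deg_gt0 ?NN_gt0.
- exact: crossdB.
Qed.

End Graph.


Section Ineq.
Variables (R : realType) (T : finType).

Variable N : R.
Hypothesis hN : \sum_(y : T) (1 : R) = N.

Lemma sum_constN (a : R) : \sum_(y : T) a = a * N.
Proof. by rewrite -hN mulr_sumr; apply: eq_bigr=> y _; rewrite mulr1. Qed.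

Lemma const_formula (d : T -> R) (k : R) (v : T) : (forall y, d y = k) -> k != 0 ->
  (d v)^-1 / \sum_y (d y)^-1 = N^-1 /\ d v / \sum_y d y = N^-1.
Proof.
move=> hd hk.
have E1 : \sum_y (d y)^-1 = k^-1 * N.
  by rewrite -sum_constN; apply: eq_bigr=> y _; rewrite hd.
have E2 : \sum_y d y = k * N.
  by rewrite -sum_constN; apply: eq_bigr=> y _; rewrite hd.
rewrite E1 E2 (hd v).
by split; rewrite invfM mulrA mulfV ?mul1r ?invr_eq0.
Qed.

Lemma sum_const2 (a : R) : \sum_(u : T) \sum_(x : T) a = a * N * N.
Proof. by rewrite sum_constN sum_constN. Qed.

Lemma ineq (d : T -> R) (v : T) : (forall u, 0 < d u) ->
  ~ ((d v)^-1 / \sum_y (d y)^-1 < N^-1) ->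
  ~ (d v / \sum_y d y < N^-1) ->
  (d v)^-1 / \sum_y (d y)^-1 = N^-1 /\ d v / \sum_y d y = N^-1.
Proof.
move=> hd H1 H2.
set a := \sum_y (d y)^-1; set b := \sum_y d y.
have Np : 0 < N by rewrite -hN (bigD1 v) //= ltr_wpDr // sumr_ge0.
have ap : 0 < a by rewrite /a (bigD1 v) //= ltr_wpDr ?invr_gt0 // sumr_ge0 // => y _; rewrite ltW ?invr_gt0.
have bp : 0 < b by rewrite /b (bigD1 v) //= ltr_wpDr // sumr_ge0 // => y _; rewrite ltW.
have dp := hd v.
have h1 : N^-1 <= (d v)^-1 / a by rewrite leNgt; apply/negP.
have h2 : N^-1 <= d v / b by rewrite leNgt; apply/negP.
have e1 : a * d v <= N.
  have : N * (a * d v) * N^-1 <= N * (a * d v) * ((d v)^-1 / a).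
    by rewrite ler_wpM2l // mulr_ge0 // ltW // mulr_gt0.
  have -> : N * (a * d v) * N^-1 = a * d v by field; rewrite lt0r_neq0.
  have -> : N * (a * d v) * ((d v)^-1 / a) = N by field; rewrite !lt0r_neq0.
  done.
have e2 : b <= N * d v.
  have : N * b * N^-1 <= N * b * (d v / b).
    by rewrite ler_wpM2l // mulr_ge0 // ltW.
  have -> : N * b * N^-1 = b by field; rewrite lt0r_neq0.
  have -> : N * b * (d v / b) = N * d v by field; rewrite !lt0r_neq0.
  done.
have eab : a * b <= N * N.
  have : a * b <= a * (N * d v) by rewrite ler_wpM2l // ltW.
  have : N * (a * d v) <= N * N by rewrite ler_wpM2l // ltW.
  move=> h h'; apply: (le_trans h'); rewrite (_ : a * (N * d v) = N * (a * d v)) //; ring.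
pose t u x := (d x - d u) ^+ 2 / (d u * d x).
have tge0 : forall u x, 0 <= t u x.
  by move=> u x; rewrite /t divr_ge0 ?sqr_ge0 // ltW // mulr_gt0.
have S1 : \sum_u \sum_x d x / d u = a * b.
  rewrite /a mulr_suml; apply: eq_bigr=> u _; rewrite /b mulr_sumr.
  by apply: eq_bigr=> x _; rewrite mulrC.
have S2 : \sum_u \sum_x d u / d x = a * b by rewrite exchange_big.
have St : \sum_u \sum_x t u x = a * b + a * b - 2 * N * N.
  have -> : a * b + a * b - 2 * N * N = \sum_u \sum_x d x / d u + \sum_u \sum_x d u / d x - \sum_(u : T) \sum_(x : T) (2 : R).
    by rewrite S1 S2 sum_const2.
  rewrite -!big_split /= -sumrB; apply: eq_bigr=> u _.
  rewrite -big_split -sumrB /=; apply: eq_bigr=> x _.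
  rewrite /t; field; by rewrite !lt0r_neq0.
have St0 : \sum_u \sum_x t u x = 0.
  apply/eqP; rewrite eq_le; apply/andP; split.
    by rewrite St; lra.
  by apply: sumr_ge0=> u _; apply: sumr_ge0.
have hc : forall y, d y = d v.
  move=> y.
  have H : \sum_x t y x = 0 by apply: (psumr_eq0P _ St0) => // u _; apply: sumr_ge0.
  have Ht : t y v = 0 by apply: (psumr_eq0P _ H).
  move/eqP: Ht; rewrite /t mulf_eq0 invr_eq0 (gt_eqF (mulr_gt0 (hd y) (hd v))) orbF sqrf_eq0 subr_eq0.
  by move/eqP ->.
exact: const_formula hc (lt0r_neq0 dp).
Qed.

End Ineq.

Lemma complete_weighted (R : realType) (T : finType) : weighted_graph (@complete_w R T).
Proof.
split=> [u v|u v|u]; rewrite /complete_w.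
- by rewrite eq_sym.
- by case: (u == v).
- by rewrite eqxx.
Qed.

Lemma complete_conn (R : realType) (T : finType) : graph_connected (@complete_w R T).
Proof.
move=> u v; case: (eqVneq u v) => [->|h]; first exact: connect0.
by apply: connect1; rewrite /adj /complete_w (negbTE h) ltr01.
Qed.

Lemma complete_deg (R : realType) (T : finType) (u : T) :
  deg (@complete_w R T) u = \sum_(y : T) (1 : R) - 1.
Proof.
have E : \sum_(x : T) ((u == x)%:R : R) = 1.
  by rewrite (bigD1 u) //= eqxx big1 ?addr0 // => x /negbTE; rewrite eq_sym => ->.
rewrite -{2}E -sumrB /deg; apply: eq_bigr=> x _; rewrite /complete_w.
by case: (u == x); rewrite ?subrr ?subr0.
Qed.

Theorem theorem1 (R : realType) (T : finType) (w : T -> T -> R)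
  (hw : weighted_graph w) (hconn : graph_connected w) (v : T) :
  rho_Bd w 1 v < rho_Bd (@complete_w R T) 1 v
  \/ rho_dB w 1 v < rho_dB (@complete_w R T) 1 v
  \/ (rho_Bd w 1 v = rho_Bd (@complete_w R T) 1 v
      /\ rho_dB w 1 v = rho_dB (@complete_w R T) 1 v).
Proof.
case: (boolP [exists u : T, exists x : T, u != x]) => [/existsP [u0 /existsP [x0 hux]]|hne].
  have hK := @complete_weighted R T.
  have cK := @complete_conn R T.
  set N : R := \sum_(y : T) (1 : R).
  have hN : \sum_(y : T) (1 : R) = N by [].
  have kK : \sum_(y : T) (1 : R) - 1 != 0.
    by rewrite -(@complete_deg R T u0); apply: lt0r_neq0; exact: (deg_gt0 hK cK hux).
  have [KBd KdB] := @const_formula R T N hN (deg (@complete_w R T)) _ v (@complete_deg R T) kK.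
  rewrite (rhoBd_formula hw hconn hux) (rhodB_formula hw hconn hux).
  rewrite (rhoBd_formula hK cK hux) (rhodB_formula hK cK hux) KBd KdB.
  case: (boolP ((deg w v)^-1 / \sum_y (deg w y)^-1 < N^-1)) => h1; first by left.
  case: (boolP (deg w v / \sum_y deg w y < N^-1)) => h2; first by right; left.
  right; right; apply: (ineq hN (deg_gt0 hw hconn hux)); exact/negP.
have Ew : w = @complete_w R T.
  apply: funext=> u; apply: funext=> x.
  have -> : x = u.
    apply/eqP; apply: contraNT hne => h; apply/existsP; exists u; apply/existsP; exists x.
    by rewrite eq_sym.
  by case: hw => _ _ ->; rewrite /complete_w eqxx.
by rewrite Ew; right; right.
Qed.
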